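(* Let $R$ be a finite Frobenius ring, $M$ a finite $R$-bimodule, and $B$ a non-degenerate bilinear form on $M$. Then $$\mathrm{BLF}(M)=\{B\cdot\gamma:\gamma\in\operatorname{Aut}({}_RM)\}=\{B\cdot\eta:\eta\in\operatorname{Aut}(M_R)\}.$$
   Context: A bilinear form on $M$ is a map $B:M\times M\to R$ that is biadditive with $B(rx,y)=rB(x,y)$ and $B(x,yr)=B(x,y)r$ for $r\in R$, $x,y\in M$. It is non-degenerate if $B(x,y)=0$ for all $y$ implies $x=0$, and $B(x,y)=0$ for all $x$ implies $y=0$. $\mathrm{BLF}(M)$ is the set of non-degenerate bilinear forms on $M$. $\operatorname{Aut}({}_RM)$ (resp. $\operatorname{Aut}(M_R)$) is the group of left (resp. right) $R$-module automorphisms of $M$. For $\gamma\in\operatorname{Aut}({}_RM)$, $(B\cdot\gamma)(x,y)=B(\gamma(x),y)$; for $\eta\in\operatorname{Aut}(M_R)$, $(B\cdot\eta)(x,y)=B(x,\eta(y))$. *)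

(* Defs.v *)
From HB Require Import structures.
From mathcomp Require Import all_boot all_order all_algebra all_field.
Set Implicit Arguments. Unset Strict Implicit. Unset Printing Implicit Defensive.
Import Order.TTheory GRing.Theory Num.Theory.
Local Open Scope ring_scope.

Definition additive_character (R : finNzRingType) (chi : R -> algC) : Prop :=
  chi 0 = 1 /\ forall x y : R, chi (x + y) = chi x * chi y.

Definition is_left_ideal (R : finNzRingType) (I : {set R}) : Prop :=
  0 \in I /\ (forall x y, x \in I -> y \in I -> x + y \in I) /\
  (forall r x, x \in I -> r * x \in I).

Definition left_generating (R : finNzRingType) (chi : R -> algC) : Prop :=
  forall I : {set R}, is_left_ideal I ->
    (forall x, x \in I -> chi x = 1) -> I = [set 0].

(* A finite ring is Frobenius iff it admits a (left) generating character
   (Wood's characterization, standard definition for finite rings). *)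
Definition frobenius_ring (R : finNzRingType) : Prop :=
  exists chi : R -> algC, additive_character chi /\ left_generating chi.

Record bimodule (R : finNzRingType) (M : zmodType) := Bimodule {
  lact : R -> M -> M;
  ract : M -> R -> M;
  lactDr : forall r x y, lact r (x + y) = lact r x + lact r y;
  lactDl : forall r s x, lact (r + s) x = lact r x + lact s x;
  lactA  : forall r s x, lact (r * s) x = lact r (lact s x);
  lact1  : forall x, lact 1 x = x;
  ractDl : forall x y r, ract (x + y) r = ract x r + ract y r;
  ractDr : forall x r s, ract x (r + s) = ract x r + ract x s;
  ractA  : forall x r s, ract x (r * s) = ract (ract x r) s;
  ract1  : forall x, ract x 1 = x;
  lractA : forall r x s, ract (lact r x) s = lact r (ract x s)
}.

Section BLF.
Variables (R : finNzRingType) (M : finZmodType) (bm : bimodule R M).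

Definition bilinear_form (B : M -> M -> R) : Prop :=
  (forall x y z, B (x + y) z = B x z + B y z) /\
  (forall x y z, B x (y + z) = B x y + B x z) /\
  (forall r x y, B (lact bm r x) y = r * B x y) /\
  (forall r x y, B x (ract bm y r) = B x y * r).

Definition nondegenerate (B : M -> M -> R) : Prop :=
  (forall x, (forall y, B x y = 0) -> x = 0) /\
  (forall y, (forall x, B x y = 0) -> y = 0).

Definition BLF (B : M -> M -> R) : Prop := bilinear_form B /\ nondegenerate B.

Definition left_aut (g : M -> M) : Prop :=
  bijective g /\ (forall x y, g (x + y) = g x + g y) /\
  (forall r x, g (lact bm r x) = lact bm r (g x)).

Definition right_aut (h : M -> M) : Prop :=
  bijective h /\ (forall x y, h (x + y) = h x + h y) /\
  (forall x r, h (ract bm x r) = ract bm (h x) r).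

Definition act_left (B : M -> M -> R) (g : M -> M) : M -> M -> R :=
  fun x y => B (g x) y.
Definition act_right (B : M -> M -> R) (h : M -> M) : M -> M -> R :=
  fun x y => B x (h y).

End BLF.

(* Main.v *)
Require Import Defs.
From HB Require Import structures.
From mathcomp Require Import all_boot all_order all_algebra all_field.
Set Implicit Arguments. Unset Strict Implicit. Unset Printing Implicit Defensive.
Import Order.TTheory GRing.Theory Num.Theory.
Local Open Scope ring_scope.

From Stdlib Require Import FunctionalExtensionality.
Definition ischar (G : finZmodType) (a : G -> algC) :=
  a 0 = 1 /\ forall x y, a (x + y) = a x * a y.

Lemma ischarN (G : finZmodType) (a : G -> algC) : ischar a ->
  forall x, a x * a (- x) = 1.
Proof. by move=> [a0 aM] x; rewrite -aM subrr a0. Qed.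

Lemma sum_char0 (G : finZmodType) (c : G -> algC) z : ischar c -> c z != 1 ->
  \sum_x c x = 0.
Proof.
move=> [c0 cM] cz.
have : \sum_x c x = c z * \sum_x c x.
  rewrite [LHS](reindex_inj (addrI z)) mulr_sumr.
  by apply: eq_bigr => x _; rewrite cM.
move=> h; have : (1 - c z) * \sum_x c x = 0 by rewrite mulrBl mul1r -h subrr.
move/eqP; rewrite mulf_eq0 subr_eq0 eq_sym (negbTE cz) /=; exact: eqP.
Qed.

Lemma orth_neq (G : finZmodType) (a b : G -> algC) z : ischar a -> ischar b ->
  a z != b z -> \sum_x a x * b (- x) = 0.
Proof.
move=> ha hb nz.
have hc : ischar (fun x => a x * b (- x)).
  case: ha => a0 aM; case: hb => b0 bM; split; first by rewrite oppr0 a0 b0 mulr1.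
  by move=> x y; rewrite aM opprD bM mulrACA.
apply: (sum_char0 (z := z) hc); apply: contra nz => /eqP h; apply/eqP.
by rewrite -[a z]mulr1 -(ischarN hb z) mulrCA h mulr1.
Qed.

Lemma orth_eq (G : finZmodType) (a : G -> algC) : ischar a ->
  \sum_x a x * a (- x) = #|G|%:R.
Proof.
move=> ha; rewrite (eq_bigr (fun _ => 1)); last by move=> x _; rewrite ischarN.
by rewrite sumr_const.
Qed.
Section Mx.
Variables (T : finType) (G : finZmodType) (k : nat) (e : 'I_k -> T) (a : T -> G -> algC).
Hypothesis e_inj : injective e.
Hypothesis a_char : forall i, ischar (a (e i)).
Hypothesis a_inj : forall i j, (forall x, a (e i) x = a (e j) x) -> i = j.

Definition chA : 'M[algC]_(k, #|G|) := \matrix_(i, j) a (e i) (enum_val j).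
Definition chA2 : 'M[algC]_(k, #|G|) := \matrix_(i, j) a (e i) (- enum_val j).

Lemma sum_enum (F : G -> algC) : \sum_(j < #|G|) F (enum_val j) = \sum_x F x.
Proof. by rewrite -big_enum_val. Qed.

Lemma chA_mul : chA *m chA2^T = (#|G|%:R : algC)%:M.
Proof.
apply/matrixP => i i'; rewrite !mxE.
under eq_bigr => j _ do rewrite !mxE.
rewrite (sum_enum (fun x => a (e i) x * a (e i') (- x))).
case: eqP => [<-|ne]; first by rewrite orth_eq // mulr1n.
rewrite mulr0n.
have : ~~ [forall x, a (e i) x == a (e i') x].
  apply/negP => /forallP h; apply: ne; apply: a_inj => x; exact/eqP.
rewrite negb_forall => /existsP [z hz].
exact: (orth_neq (z := z)).
Qed.

Lemma chA_rank : (k <= #|G|)%N.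
Proof.
have hn : (#|G|%:R : algC) != 0.
  by rewrite pnatr_eq0 -lt0n; apply/card_gt0P; exists 0.
have := mxrankM_maxl chA chA2^T.
rewrite chA_mul -scalemx1 mxrank_scale_nz // mxrank1 => h.
exact: leq_trans h (rank_leq_col _).
Qed.
End Mx.

Lemma char_sep (G : finZmodType) (a : G -> G -> algC) :
  (forall t, ischar (a t)) -> (forall s t, (forall x, a s x = a t x) -> s = t) ->
  forall g, (forall t, a t g = 1) -> g = 0.
Proof.
move=> ac ai g hg.
pose e : 'I_#|G| -> G := enum_val.
have einj : injective e by apply: enum_val_inj.
have M := chA_mul (e := e) (a := a) (fun i => ac _) (fun i j h => einj _ _ (ai _ _ h)).
have hn : (#|G|%:R : algC) != 0.
  by rewrite pnatr_eq0 -lt0n; apply/card_gt0P; exists 0.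
have M1 : chA e a *m ((#|G|%:R)^-1 *: (chA2 e a)^T) = 1%:M.
  by rewrite -scalemxAr M scale_scalar_mx mulVf.
have := mulmx1C M1 => /matrixP /(_ (enum_rank g) (enum_rank (0 : G))).
rewrite !mxE.
under eq_bigr => j _ do rewrite !mxE /e !enum_rankK.
have hg' : forall t, a t (- g) = 1.
  by move=> t; have := ischarN (ac t) g; rewrite hg mul1r.
under eq_bigr => j _ do rewrite hg' (proj1 (ac _)) mulr1.
rewrite sumr_const card_ord.
rewrite mulr1 -[_ *+ #|G|]mulr_natr mulVf //.
case: eqP => [/enum_rank_inj //|_] /eqP; by rewrite oner_eq0.
Qed.

Lemma char_count (T : finType) (G : finZmodType) (S : {set T}) (a : T -> G -> algC) :
  (forall t, t \in S -> ischar (a t)) ->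
  (forall s t, s \in S -> t \in S -> (forall x, a s x = a t x) -> s = t) ->
  (#|S| <= #|G|)%N.
Proof.
move=> ac ai.
apply: (chA_rank (e := @enum_val T (mem S)) (a := a)).
  by move=> i; apply: ac; exact: enum_valP.
move=> i j h; apply: enum_val_inj; apply: ai => //; exact: enum_valP.
Qed.

Lemma surj_card (T F : finType) (phi : T -> F) (S : {set F}) :
  injective phi -> (forall t, phi t \in S) -> (#|S| <= #|T|)%N ->
  forall f, f \in S -> exists t, phi t = f.
Proof.
move=> inj hS hc.
have : phi @: setT == S.
  rewrite eqEcard; apply/andP; split.
    by apply/subsetP => _ /imsetP[t _ ->].
  by rewrite card_imset // cardsT.
move/eqP => E f; rewrite -E => /imsetP [t _ ->]; by exists t.
Qed.

Lemma additive_sub (U V : zmodType) (f : U -> V) :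
  (forall a b, f (a + b) = f a + f b) -> forall a b, f (a - b) = f a - f b.
Proof.
move=> hf.
have f0 : f 0 = 0 by apply: (addrI (f 0)); rewrite -hf !addr0.
have fN : forall b, f (- b) = - f b.
  by move=> b; apply: (addrI (f b)); rewrite -hf !subrr f0.
by move=> a b; rewrite hf fN.
Qed.

Lemma additive0 (U V : zmodType) (f : U -> V) :
  (forall a b, f (a + b) = f a + f b) -> f 0 = 0.
Proof. by move=> hf; apply: (addrI (f 0)); rewrite -hf !addr0. Qed.

Section Ring.
Variables (R : finNzRingType) (chi : R -> algC).
Hypothesis hchi : additive_character chi.
Hypothesis hgen : left_generating chi.

Lemma chi_char : ischar (chi : (R : finZmodType) -> algC).
Proof. exact: hchi. Qed.

Lemma chi_sub u v : chi u = chi v -> chi (u - v) = 1.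
Proof.
case: hchi => c0 cM e.
have hv : chi v * chi (- v) = 1 by rewrite -cM subrr c0.
by rewrite cM e hv.
Qed.

Lemma right_gen (I : {set R}) : 0 \in I ->
  (forall x y, x \in I -> y \in I -> x + y \in I) ->
  (forall x r, x \in I -> x * r \in I) ->
  (forall x, x \in I -> chi x = 1) -> I = [set 0].
Proof.
move=> I0 ID IM Ichi.
have sep := @char_sep R (fun s x => chi (x * s)).
have key : forall g, g \in I -> g = 0.
  move=> g gI; apply: sep => //.
  - move=> s; case: hchi => c0 cM; split; first by rewrite mul0r.
    by move=> x y; rewrite mulrDl cM.
  - move=> s t h.
    pose J := [set x * (s - t) | x : R].
    have hJ : J = [set 0].
      apply: hgen.
        split; first by apply/imsetP; exists 0 => //; rewrite mul0r.
        split.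
          move=> _ _ /imsetP[x _ ->] /imsetP[y _ ->]; apply/imsetP; exists (x + y) => //.
          by rewrite mulrDl.
        by move=> r _ /imsetP[x _ ->]; apply/imsetP; exists (r * x) => //; rewrite mulrA.
      move=> _ /imsetP[x _ ->]; rewrite mulrBr; exact: chi_sub.
    have : 1 * (s - t) \in J by apply/imsetP; exists 1.
    by rewrite hJ mul1r in_set1 subr_eq0 => /eqP.
  - by move=> s; apply: Ichi; apply: IM.
apply/setP => x; rewrite in_set1; apply/idP/idP; first by move/key ->.
by move/eqP ->.
Qed.
End Ring.

Section Bimod.
Variables (R : finNzRingType) (M : finZmodType) (bm : bimodule R M).

Definition PL (f : {ffun M -> R}) : bool :=
  [forall x, forall y, f (x + y) == f x + f y] &&
  [forall r, forall x, f (lact bm r x) == r * f x].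
Definition PR (f : {ffun M -> R}) : bool :=
  [forall x, forall y, f (x + y) == f x + f y] &&
  [forall x, forall r, f (ract bm x r) == f x * r].

Variables (chi : R -> algC).
Hypothesis hchi : additive_character chi.
Hypothesis hgen : left_generating chi.

Lemma ffun_char (f : {ffun M -> R}) :
  [forall x, forall y, f (x + y) == f x + f y] -> ischar (fun x => chi (f x)).
Proof.
move=> /forallP h.
have hf : forall x y, f (x + y) = f x + f y by move=> x y; apply/eqP; exact: (forallP (h x)).
case: hchi => c0 cM; split; first by rewrite (additive0 hf).
by move=> x y; rewrite hf cM.
Qed.

Lemma cardL : (#|[set f | PL f]| <= #|M|)%N.
Proof.
apply: (@char_count _ M _ (fun (f : {ffun M -> R}) (x : M) => chi (f x))).
  by move=> f; rewrite inE => /andP[h _]; exact: ffun_char.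
move=> f g; rewrite !inE => /andP[/forallP hf1 /forallP hf2] /andP[/forallP hg1 /forallP hg2] e.
have fD : forall x y, f (x + y) = f x + f y by move=> x y; apply/eqP; exact: (forallP (hf1 x)).
have gD : forall x y, g (x + y) = g x + g y by move=> x y; apply/eqP; exact: (forallP (hg1 x)).
have fL : forall r x, f (lact bm r x) = r * f x by move=> r x; apply/eqP; exact: (forallP (hf2 r)).
have gL : forall r x, g (lact bm r x) = r * g x by move=> r x; apply/eqP; exact: (forallP (hg2 r)).
pose I := [set f x - g x | x : M].
have hI : I = [set 0].
  apply: hgen.
    split; first by apply/imsetP; exists 0 => //; rewrite (additive0 fD) (additive0 gD) subrr.
    split.
      move=> _ _ /imsetP[x _ ->] /imsetP[y _ ->]; apply/imsetP; exists (x + y) => //.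
      by rewrite fD gD addrACA opprD.
    move=> r _ /imsetP[x _ ->]; apply/imsetP; exists (lact bm r x) => //.
    by rewrite fL gL mulrBr.
  move=> _ /imsetP[x _ ->]; exact: (chi_sub hchi).
apply/ffunP => x.
have : f x - g x \in I by apply/imsetP; exists x.
by rewrite hI in_set1 subr_eq0 => /eqP.
Qed.

Lemma cardR : (#|[set f | PR f]| <= #|M|)%N.
Proof.
apply: (@char_count _ M _ (fun (f : {ffun M -> R}) (x : M) => chi (f x))).
  by move=> f; rewrite inE => /andP[h _]; exact: ffun_char.
move=> f g; rewrite !inE => /andP[/forallP hf1 /forallP hf2] /andP[/forallP hg1 /forallP hg2] e.
have fD : forall x y, f (x + y) = f x + f y by move=> x y; apply/eqP; exact: (forallP (hf1 x)).
have gD : forall x y, g (x + y) = g x + g y by move=> x y; apply/eqP; exact: (forallP (hg1 x)).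
have fL : forall x r, f (ract bm x r) = f x * r by move=> x r; apply/eqP; exact: (forallP (hf2 x)).
have gL : forall x r, g (ract bm x r) = g x * r by move=> x r; apply/eqP; exact: (forallP (hg2 x)).
pose I := [set f x - g x | x : M].
have hI : I = [set 0].
  apply: (right_gen hchi hgen).
  - by apply/imsetP; exists 0 => //; rewrite (additive0 fD) (additive0 gD) subrr.
  - move=> _ _ /imsetP[x _ ->] /imsetP[y _ ->]; apply/imsetP; exists (x + y) => //.
    by rewrite fD gD addrACA opprD.
  - move=> _ r /imsetP[x _ ->]; apply/imsetP; exists (ract bm x r) => //.
    by rewrite fL gL mulrBl.
  - move=> _ /imsetP[x _ ->]; exact: (chi_sub hchi).
apply/ffunP => x.
have : f x - g x \in I by apply/imsetP; exists x.
by rewrite hI in_set1 subr_eq0 => /eqP.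
Qed.

End Bimod.

Section Main.
Variables (R : finNzRingType) (M : finZmodType) (bm : bimodule R M).

Lemma nd_inj2 (B : M -> M -> R) y z : BLF bm B -> (forall x, B x y = B x z) -> y = z.
Proof.
move=> [[D1 [D2 _]] [_ n2]] h; apply/eqP; rewrite -subr_eq0; apply/eqP.
by apply: n2 => x; rewrite (additive_sub (D2 x)) h subrr.
Qed.

Lemma nd_inj1 (B : M -> M -> R) y z : BLF bm B -> (forall x, B y x = B z x) -> y = z.
Proof.
move=> [[D1 [D2 _]] [n1 _]] h; apply/eqP; rewrite -subr_eq0; apply/eqP.
apply: n1 => x.
by rewrite (additive_sub (f := fun u => B u x) (fun a b => D1 a b x)) h subrr.
Qed.

Lemma right_exists (B B' : M -> M -> R) :
  (#|[set f | PL bm f]| <= #|M|)%N -> BLF bm B -> BLF bm B' ->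
  exists h, right_aut bm h /\ B' = act_right B h.
Proof.
move=> hc hB hB'.
pose phi (B0 : M -> M -> R) y := [ffun x => B0 x y].
have inj : injective (phi B).
  by move=> y z /ffunP e; apply: (nd_inj2 hB) => x; have := e x; rewrite !ffunE.
have inS : forall B0, BLF bm B0 -> forall y, phi B0 y \in [set f | PL bm f].
  move=> B0 [[D1 [D2 [L1 L2]]] _] y; rewrite inE; apply/andP; split;
    apply/forallP => a; apply/forallP => b; rewrite !ffunE; apply/eqP.
    exact: D1.
  exact: L1.
have ex := surj_card inj (inS B hB) hc.
have ex' : forall y, exists t, phi B t == phi B' y.
  by move=> y; case: (ex _ (inS B' hB' y)) => t e; exists t; apply/eqP.
pose h y := xchoose (ex' y).
have key : forall x y, B x (h y) = B' x y.
  by move=> x y; have := xchooseP (ex' y) => /eqP /ffunP /(_ x); rewrite !ffunE.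
have hB0 := hB; have hB'0 := hB'.
move: hB hB' => [[D1 [D2 [L1 L2]]] _] [[D1' [D2' [L1' L2']]] _].
exists h; split; last first.
  by apply: functional_extensionality => x; apply: functional_extensionality => y; rewrite /act_right key.
split; [|split].
- apply: injF_bij => y z e; apply: (nd_inj2 hB'0) => x; by rewrite -!key e.
- move=> y z; apply: (nd_inj2 hB0) => x; by rewrite key D2 !key D2'.
- move=> y r; apply: (nd_inj2 hB0) => x; by rewrite key L2 key L2'.
Qed.

Lemma right_blf (B : M -> M -> R) h : BLF bm B -> right_aut bm h -> BLF bm (act_right B h).
Proof.
move=> [[D1 [D2 [L1 L2]]] [n1 n2]] [[hinv hK hK'] [hD hR]].
rewrite /act_right; split; [split; [|split; [|split]] | split].
- by move=> x y z; rewrite D1.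
- by move=> x y z; rewrite hD D2.
- by move=> r x y; rewrite L1.
- by move=> r x y; rewrite hR L2.
- by move=> x hx; apply: n1 => y; rewrite -(hK' y) hx.
- move=> y hy; have e : h y = 0 by apply: n2.
  by have h0 := additive0 hD; rewrite -(hK y) e -{1}h0 hK.
Qed.

Lemma left_exists (B B' : M -> M -> R) :
  (#|[set f | PR bm f]| <= #|M|)%N -> BLF bm B -> BLF bm B' ->
  exists g, left_aut bm g /\ B' = act_left B g.
Proof.
move=> hc hB hB'.
pose phi (B0 : M -> M -> R) x := [ffun y => B0 x y].
have inj : injective (phi B).
  by move=> y z /ffunP e; apply: (nd_inj1 hB) => x; have := e x; rewrite !ffunE.
have inS : forall B0, BLF bm B0 -> forall y, phi B0 y \in [set f | PR bm f].
  move=> B0 [[D1 [D2 [L1 L2]]] _] y; rewrite inE; apply/andP; split;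
    apply/forallP => a; apply/forallP => b; rewrite !ffunE; apply/eqP.
    exact: D2.
  exact: L2.
have ex := surj_card inj (inS B hB) hc.
have ex' : forall y, exists t, phi B t == phi B' y.
  by move=> y; case: (ex _ (inS B' hB' y)) => t e; exists t; apply/eqP.
pose h y := xchoose (ex' y).
have key : forall x y, B (h y) x = B' y x.
  by move=> x y; have := xchooseP (ex' y) => /eqP /ffunP /(_ x); rewrite !ffunE.
have hB0 := hB; have hB'0 := hB'.
move: hB hB' => [[D1 [D2 [L1 L2]]] _] [[D1' [D2' [L1' L2']]] _].
exists h; split; last first.
  by apply: functional_extensionality => x; apply: functional_extensionality => y; rewrite /act_left key.
split; [|split].
- apply: injF_bij => y z e; apply: (nd_inj1 hB'0) => x; by rewrite -!key e.
- move=> y z; apply: (nd_inj1 hB0) => x; by rewrite key D1 !key D1'.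
- move=> r y; apply: (nd_inj1 hB0) => x; by rewrite key L1 key L1'.
Qed.

Lemma left_blf (B : M -> M -> R) h : BLF bm B -> left_aut bm h -> BLF bm (act_left B h).
Proof.
move=> [[D1 [D2 [L1 L2]]] [n1 n2]] [[hinv hK hK'] [hD hR]].
rewrite /act_left; split; [split; [|split; [|split]] | split].
- by move=> x y z; rewrite hD D1.
- by move=> x y z; rewrite D2.
- by move=> r x y; rewrite hR L1.
- by move=> r x y; rewrite L2.
- move=> y hy; have e : h y = 0 by apply: n1.
  by have h0 := additive0 hD; rewrite -(hK y) e -{1}h0 hK.
- by move=> x hx; apply: n2 => y; rewrite -(hK' y) hx.
Qed.
End Main.

Theorem theoremA1 (R : finNzRingType) (M : finZmodType) (bm : bimodule R M)
  (B : M -> M -> R) :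
  frobenius_ring R -> BLF bm B ->
  (forall B' : M -> M -> R,
     BLF bm B' <-> exists g : M -> M, left_aut bm g /\ B' = act_left B g) /\
  (forall B' : M -> M -> R,
     BLF bm B' <-> exists h : M -> M, right_aut bm h /\ B' = act_right B h).
Proof.
move=> [chi [hchi hgen]] hB; split => B'; split.
- move=> hB'; exact: left_exists (cardR bm hchi hgen) hB hB'.
- by move=> [g [hg ->]]; exact: left_blf.
- move=> hB'; exact: right_exists (cardL bm hchi hgen) hB hB'.
- by move=> [h [hh ->]]; exact: right_blf.
Qed.
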